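(* Let $W\in\mathcal{P}(\mathcal{Y}|\mathcal{X})$ be a symmetric channel with $R_{\mathrm{cr}}<C(W)$ and no all-zero column, let $R_\infty<R<C(W)$, and let $q_R$, $\mathrm{e}_{\mathrm{SP}}(\cdot,R)$ be as in the context. (i) For every $\lambda\in\mathbb{R}$, $M_x(\lambda)=\sum_{y\in\mathrm{supp}(W(\cdot|x))}W(y|x)^{1-\lambda}q_R(y)^\lambda$ is finite and does not depend on $x\in\mathcal{X}$. (ii) Fix $x_{\mathrm o}\in\mathcal{X}$ and let $\mathbf{x}_{\mathrm o}^N$ be the $N$-tuple with all entries $x_{\mathrm o}$. For every $(N,R)$ code with ideal feedback (encoding maps $f_n$), every message $m$ and every $r\ge0$ for which $\mathrm{e}_{\mathrm{SP}}(r,R)$ is defined, $$P_{\mathbf{Y}^N|M}\{\mathcal{S}(m,r)\mid m\}=W\{\mathcal{S}(\mathbf{x}_{\mathrm o}^N,r)\mid\mathbf{x}_{\mathrm o}^N\},$$ where $\mathcal{S}(\mathbf{x}^N,r)=\{\mathbf{y}^N:\frac1N\sum_n\ln\frac{W(y_n|x_n)}{q_R(y_n)}\le r-\mathrm{e}_{\mathrm{SP}}(r,R)\}$ and $\mathcal{S}(m,r)=\{\mathbf{y}^N:\frac1N\sum_n\ln\frac{W(y_n|f_n(m,\mathbf{y}^{n-1}))}{q_R(y_n)}\le r-\mathrm{e}_{\mathrm{SP}}(r,R)\}$.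
   Context: $\mathcal{X},\mathcal{Y}$ finite; symmetric (Gallager): outputs partitionable into subsets within each of which every row of the transition submatrix is a permutation of every other row and every column of every other column. $U_{\mathcal{X}}$ uniform. $\mathrm{E}_{\mathrm{SP}}(r,U_{\mathcal{X}})=\min_{V:I(U_{\mathcal{X}};V)\le r}D(V\|W|U_{\mathcal{X}})$, $D(V\|W|Q)=\sum_xQ(x)D(V(\cdot|x)\|W(\cdot|x))$ and for $q\in\mathcal{P}(\mathcal{Y})$, $D(V\|q|Q)=\sum_xQ(x)D(V(\cdot|x)\|q)$. $R_\infty$, $R_{\mathrm{cr}}$, $C(W)$: infinite-sphere-packing rate, critical rate, capacity. $\rho_R=-\partial_r\mathrm{E}_{\mathrm{SP}}(r,U_{\mathcal{X}})|_{r=R}$ and $q_R(y)\propto(\sum_xU_{\mathcal{X}}(x)W(y|x)^{1/(1+\rho_R)})^{1+\rho_R}$ (normalized). For $r\le R$ (with the infimum below over a nonempty set), $\mathrm{e}_{\mathrm{SP}}(r,R)=\inf_{V:D(V\|q_R|U_{\mathcal{X}})\le r}D(V\|W|U_{\mathcal{X}})$. A code with ideal feedback has $f_n:\mathcal{M}\times\mathcal{Y}^{n-1}\to\mathcal{X}$ and output law $P_{\mathbf{Y}^N|M}(\mathbf{y}^N|m)=\prod_nW(y_n|f_n(m,\mathbf{y}^{n-1}))$. *)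

(* Defs.v *)
From HB Require Import structures.
From mathcomp Require Import all_boot all_order all_algebra.
From mathcomp Require Import all_classical all_reals all_analysis.
From mathcomp Require Import fingroup perm.
Set Implicit Arguments. Unset Strict Implicit. Unset Printing Implicit Defensive.
Import Order.TTheory GRing.Theory Num.Theory.
Local Open Scope classical_set_scope.
Local Open Scope ring_scope.

Section Channels.
Variables (R : realType) (X Y : finType).

Definition is_dist (T : finType) (p : T -> R) :=
  (forall t, 0 <= p t) /\ \sum_(t : T) p t = 1.

Definition is_channel (W : X -> Y -> R) := forall x, is_dist (W x).

Definition unif (x : X) : R := #|X|%:R^-1.

(* Gallager symmetric channel: the outputs can be partitioned into subsets
   such that, inside each subset B, every row of the submatrix (W x y)_{y in B}
   is a permutation of every other row, and every column (W x y)_x (y in B)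
   is a permutation of every other column. *)
Definition symmetric_channel (W : X -> Y -> R) :=
  exists P : {set {set Y}}, finset.partition P [set: Y] /\
    forall B, B \in P ->
      (forall x x', exists s : {perm Y},
          (forall y, y \in B -> s y \in B) /\
          (forall y, y \in B -> W x' y = W x (s y))) /\
      (forall y y', y \in B -> y' \in B -> exists t : {perm X},
          forall x, W x y' = W (t x) y).

Definition KL (p q : Y -> R) : \bar R :=
  (\sum_(y : Y) (if p y == 0%R then 0%E
                 else if q y == 0%R then +oo%E
                 else (p y * ln (p y / q y))%:E))%E.

Definition cdiv (V W : X -> Y -> R) (Q : X -> R) : \bar R :=
  (\sum_(x : X) (Q x)%:E * KL (V x) (W x))%E.

Definition outd (Q : X -> R) (V : X -> Y -> R) (y : Y) : R :=
  \sum_(x : X) Q x * V x y.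

Definition minfo (Q : X -> R) (V : X -> Y -> R) : \bar R :=
  cdiv V (fun _ => outd Q V) Q.

Definition capacity (W : X -> Y -> R) : \bar R :=
  ereal_sup [set minfo Q W | Q in [set Q | is_dist Q]].

Definition ESP (W : X -> Y -> R) (Q : X -> R) (r : R) : \bar R :=
  ereal_inf [set cdiv V W Q |
             V in [set V | is_channel V /\ (minfo Q V <= r%:E)%E]].

Definition Rinf (W : X -> Y -> R) : \bar R :=
  ereal_inf [set r%:E | r in [set r | (ESP W unif r < +oo)%E]].

(* critical rate (Csiszar-Korner): the smallest rate at which the convex curve
   E_SP(., U_X) meets its supporting line of slope -1, i.e. the smallest
   minimizer of r |-> E_SP(r, U_X) + r. *)
Definition Rcr (W : X -> Y -> R) : \bar R :=
  let g := fun r : R => (ESP W unif r + r%:E)%E in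
  ereal_inf [set r%:E | r in [set r | g r = ereal_inf (range g)]].

Definition rhoR (W : X -> Y -> R) (Rt : R) : R :=
  - derive1 (fun r : R => fine (ESP W unif r)) Rt.

Definition qR_unnorm (W : X -> Y -> R) (Rt : R) (y : Y) : R :=
  (\sum_(x : X) unif x * W x y `^ (1 + rhoR W Rt)^-1) `^ (1 + rhoR W Rt).

Definition qR (W : X -> Y -> R) (Rt : R) (y : Y) : R :=
  qR_unnorm W Rt y / \sum_(y' : Y) qR_unnorm W Rt y'.

Definition eSP_set (W : X -> Y -> R) (Rt r : R) : set (X -> Y -> R) :=
  [set V | is_channel V /\ (cdiv V (fun _ => qR W Rt) unif <= r%:E)%E].

Definition eSP (W : X -> Y -> R) (Rt r : R) : \bar R :=
  ereal_inf [set cdiv V W unif | V in eSP_set W Rt r].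

Definition powE (a l : R) : \bar R :=
  if a == 0 then (if l < 0 then +oo%E else if l == 0 then 1%E else 0%E)
  else (a `^ l)%:E.

Definition Mx (W : X -> Y -> R) (Rt : R) (x : X) (l : R) : \bar R :=
  (\sum_(y : Y | W x y != 0%R) (W x y `^ (1 - l))%:E * powE (qR W Rt y) l)%E.

Definition llr (W : X -> Y -> R) (q : Y -> R) (x : X) (y : Y) : \bar R :=
  if W x y == 0 then -oo%E else (ln (W x y / q y))%:E.

Definition avg_llr (W : X -> Y -> R) (q : Y -> R) (N : nat)
    (xs : 'I_N -> X) (ys : N.-tuple Y) : \bar R :=
  ((N%:R^-1)%:E * \sum_(n < N) llr W q (xs n) (tnth ys n))%E.

Definition S_fixed (W : X -> Y -> R) (Rt r : R) (N : nat) (xo : X)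
    (ys : N.-tuple Y) : bool :=
  (avg_llr W (qR W Rt) (fun _ => xo) ys <= r%:E - eSP W Rt r)%E.

Definition prob_fixed (W : X -> Y -> R) (Rt r : R) (N : nat) (xo : X) : R :=
  \sum_(ys : N.-tuple Y | S_fixed W Rt r xo ys) \prod_(n < N) W xo (tnth ys n).

(* codes with ideal feedback: f n m y^{n-1}, with y^{n-1} the first n
   (0-indexed: entries 0..n-1) outputs; P(y^N|m) = prod_n W(y_n|f_n(m,y^{n-1})) *)
Definition S_fb (W : X -> Y -> R) (Rt r : R) (N : nat) (M : finType)
    (f : 'I_N -> M -> seq Y -> X) (m : M) (ys : N.-tuple Y) : bool :=
  (avg_llr W (qR W Rt) (fun n => f n m (take n ys)) ys
     <= r%:E - eSP W Rt r)%E.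

Definition prob_fb (W : X -> Y -> R) (Rt r : R) (N : nat) (M : finType)
    (f : 'I_N -> M -> seq Y -> X) (m : M) : R :=
  \sum_(ys : N.-tuple Y | S_fb W Rt r f m ys)
     \prod_(n < N) W (f n m (take n ys)) (tnth ys n).

End Channels.

(* Main.v *)
Require Import Defs.
From HB Require Import structures.
From mathcomp Require Import all_boot all_order all_algebra.
From mathcomp Require Import all_classical all_reals all_analysis.
From mathcomp Require Import fingroup perm.
Import Order.TTheory GRing.Theory Num.Theory.
Local Open Scope classical_set_scope.
Local Open Scope ring_scope.

Lemma qR_block (R : realType) (X Y : finType) (W : X -> Y -> R) (Rt : R)
  (B : {set Y}) y y' :
  (forall y y', y \in B -> y' \in B -> exists t : {perm X},
          forall x, W x y' = W (t x) y) ->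
  y \in B -> y' \in B -> qR W Rt y' = qR W Rt y.
Proof.
move=> hc hy hy'; have [t ht] := hc _ _ hy hy'.
rewrite /qR; suff -> : qR_unnorm W Rt y' = qR_unnorm W Rt y by [].
rewrite /qR_unnorm.
set a := (1 + rhoR W Rt)^-1.
have -> : \sum_x unif R x * W x y' `^ a = \sum_x unif R x * W x y `^ a.
  transitivity (\sum_x unif R x * W (t x) y `^ a).
    by apply: eq_bigr => x _; rewrite ht.
  by rewrite [RHS](reindex_inj (@perm_inj _ t)).
by [].
Qed.

Lemma sigma_ex (R : realType) (X Y : finType) (W : X -> Y -> R) (Rt : R)
  (hsym : symmetric_channel W) (xo x : X) :
  exists s : {perm Y}, forall y, W x y = W xo (s y) /\ qR W Rt (s y) = qR W Rt y.
Proof.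
have [P [hP hB]] := hsym.
have hcov := cover_partition hP.
have htriv : finset.trivIset P by case/and3P: hP.
have : forall B : {set Y}, exists s : {perm Y}, B \in P ->
      (forall y, y \in B -> s y \in B) /\ (forall y, y \in B -> W x y = W xo (s y)).
  move=> B; case: (boolP (B \in P)) => hBP; last by exists 1%g.
  have [s hs] := proj1 (hB B hBP) xo x; by exists s.
move=> /choice [sB hsB].
have memb : forall y, y \in finset.pblock P y by move=> y; rewrite mem_pblock hcov inE.
have inP : forall y, finset.pblock P y \in P by move=> y; apply: pblock_mem; rewrite hcov inE.
pose g y := sB (finset.pblock P y) y.
have gin : forall y, g y \in finset.pblock P y by move=> y; apply: (proj1 (hsB _ (inP y))).
have gP : forall y, finset.pblock P (g y) = finset.pblock P y by move=> y; apply: same_pblock.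
have ginj : injective g.
  move=> y y' e; have e2 : finset.pblock P y = finset.pblock P y' by rewrite -gP e gP.
  by move: e; rewrite /g e2 => /perm_inj.
exists (perm ginj) => y; rewrite permE; split.
  exact: (proj2 (hsB _ (inP y))).
have hBc := proj2 (hB _ (inP y)).
exact: (@qR_block _ _ _ W Rt _ _ _ hBc (memb y) (gin y)).
Qed.

Lemma qR_gt0 (R : realType) (X Y : finType) (W : X -> Y -> R) (Rt : R)
  (hX : (0 < #|X|)%N) (hW : is_channel W)
  (hcol : forall y : Y, exists x : X, W x y != 0) y : 0 < qR W Rt y.
Proof.
have ugt0 : forall z, 0 < qR_unnorm W Rt z.
  move=> z; rewrite /qR_unnorm; apply: powR_gt0.
  have [x0 hx0] := hcol z.
  rewrite (bigD1 x0) //.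
  have h1 : 0 < unif R x0 * W x0 z `^ (1 + rhoR W Rt)^-1.
    apply: mulr_gt0; first by rewrite /unif invr_gt0 ltr0n.
    apply: powR_gt0. rewrite lt_def hx0 (proj1 (hW x0) z). done.
  have h2 : 0 <= \sum_(i | i != x0) unif R i * W i z `^ (1 + rhoR W Rt)^-1.
    apply: sumr_ge0 => i _; apply: mulr_ge0; last exact: powR_ge0.
    by rewrite /unif invr_ge0 ler0n.
  exact: ltr_wpDr h2 h1.
rewrite /qR; apply: divr_gt0; first exact: ugt0.
rewrite (bigD1 y) //.
have h1 := ugt0 y.
have h2 : 0 <= \sum_(i | i != y) qR_unnorm W Rt i.
  by apply: sumr_ge0 => i _; apply/ltW/ugt0.
exact: ltr_wpDr h2 h1.
Qed.

Theorem lemma3 (R : realType) (X Y : finType) (W : X -> Y -> R)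
  (hX : (0 < #|X|)%N)
  (hW : is_channel W) (hsym : symmetric_channel W)
  (hcr : (Rcr W < capacity W)%E)
  (hcol : forall y : Y, exists x : X, W x y != 0)
  (Rt : R) (hRinf : (Rinf W < Rt%:E)%E) (hRC : (Rt%:E < capacity W)%E) :
  (forall l : R,
     (forall x : X, Mx W Rt x l \is a fin_num) /\
     (forall x x' : X, Mx W Rt x l = Mx W Rt x' l)) /\
  (forall (xo : X) (N : nat) (M : finType) (f : 'I_N -> M -> seq Y -> X),
     expR (N%:R * Rt) <= #|M|%:R ->
     forall (m : M) (r : R), 0 <= r -> r <= Rt ->
       eSP_set W Rt r !=set0 ->
       prob_fb W Rt r f m = prob_fixed W Rt r N xo).
Proof.
have qgt0 := @qR_gt0 _ _ _ W Rt hX hW hcol.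
have Mx_eq : forall x l, Mx W Rt x l =
    (\sum_(y | W x y != 0) W x y `^ (1-l) * qR W Rt y `^ l)%:E.
  move=> x l; rewrite /Mx -sumEFin; apply: eq_bigr => y _.
  by rewrite /powE (gt_eqF (qgt0 y)) EFinM.
split.
  move=> l; split; first by move=> x; rewrite Mx_eq.
  move=> x x'; rewrite !Mx_eq; congr (_%:E).
  have [s hs] := @sigma_ex _ _ _ W Rt hsym x' x.
  transitivity (\sum_(y | W x' (s y) != 0)
                  W x' (s y) `^ (1-l) * qR W Rt (s y) `^ l).
    apply: eq_big => y; first by case: (hs y) => -> _.
    by case: (hs y) => -> ->.
  by rewrite [RHS](reindex_inj (@perm_inj _ s)).
move=> xo N M f _ m r _ _ _.
have [sg hsg] := choice (fun x => @sigma_ex _ _ _ W Rt hsym xo x).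
pose Phi (ys : N.-tuple Y) : N.-tuple Y :=
  [tuple sg (f n m (take n ys)) (tnth ys n) | n < N].
have Phiinj : injective Phi.
  move=> ys ys' e.
  have ht : forall k, (k <= N)%N -> take k ys = take k ys'.
    elim=> [|k IH] hk; first by rewrite !take0.
    have hk' : (k < N)%N by [].
    have IH' := IH (ltnW hk').
    have [y0 _] : exists y0 : Y, True by exists (tnth ys (Ordinal hk')).
    rewrite !(take_nth y0) ?size_tuple // IH'.
    congr rcons.
    have := congr1 (fun t => tnth t (Ordinal hk')) e.
    rewrite /Phi !tnth_mktuple /= IH' => /perm_inj h.
    rewrite !(tnth_nth y0) in h; exact: h.
  apply: val_inj; have := ht N (leqnn N).
  by rewrite !take_oversize ?size_tuple.
rewrite /prob_fixed (reindex_inj Phiinj) /prob_fb.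
apply: eq_big => ys.
  have e : avg_llr W (qR W Rt) (fun n => f n m (take n ys)) ys =
           avg_llr W (qR W Rt) (fun _ => xo) (Phi ys).
    have es : (\sum_(n < N) llr W (qR W Rt) ((fun n => f n m (take n ys)) n) (tnth ys n) =
               \sum_(n < N) llr W (qR W Rt) ((fun _ => xo) n) (tnth (Phi ys) n))%E.
      apply: eq_bigr => n _; rewrite /Phi tnth_mktuple /llr.
      by case: (hsg (f n m (take n ys)) (tnth ys n)) => -> ->.
    exact: (congr1 (fun s => ((N%:R^-1)%:E * s)%E) es).
  rewrite /S_fb /S_fixed e; reflexivity.
move=> _; apply: eq_bigr => n _; rewrite /Phi tnth_mktuple.
by case: (hsg (f n m (take n ys)) (tnth ys n)) => -> _.
Qed.
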